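(* Fix an integer $k\geq1$ and $V=\{0,\ldots,k\}$. Let $\varphi$ be a Boolean function on $V$ all of whose satisfying valuations have even size. Then there exists a Boolean function $\check\varphi$ on $V$ in canonical form such that $\check\varphi\simeq\varphi$.
   Context: A valuation is a subset $\nu\subseteq V$; $\nu^{(l)}$ is $\nu$ with membership of $l$ flipped. A Boolean function on $V$ is a map $\varphi:2^V\to\{\text{false},\text{true}\}$; $\mathrm{sat}(\varphi)$ is its set of satisfying valuations. $\varphi$ is in canonical form if (1) all its satisfying valuations have even size, and (2) there are no two valuations $\nu,\nu'$ of even size with $|\nu'|<|\nu|$, $\nu\in\mathrm{sat}(\varphi)$ and $\nu'\notin\mathrm{sat}(\varphi)$. Write $\varphi\xrightarrow{+(\nu,l)}\varphi'$ if $\nu,\nu^{(l)}\notin\mathrm{sat}(\varphi)$ and $\mathrm{sat}(\varphi')=\mathrm{sat}(\varphi)\cup\{\nu,\nu^{(l)}\}$, and $\varphi\xrightarrow{-(\nu,l)}\varphi'$ if $\varphi'\xrightarrow{+(\nu,l)}\varphi$. Write $\varphi\xrightarrow{\pm}\varphi'$ if one of these holds for some $\nu,l$; $\simeq$ is the reflexive-transitive closure of $\xrightarrow{\pm}$ (an equivalence relation). *)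

(* Defs.v *)
From mathcomp Require Import all_boot.
From Stdlib Require Import Relations.
Set Implicit Arguments. Unset Strict Implicit. Unset Printing Implicit Defensive.

Section Defs.
Variable V : finType.

Definition valuation := {set V}.
Definition boolfun := {ffun {set V} -> bool}.

Definition sat (phi : boolfun) : {set {set V}} := [set nu | phi nu].

Definition flip (nu : {set V}) (l : V) : {set V} :=
  if l \in nu then nu :\ l else l |: nu.

Definition canonical_form (phi : boolfun) : Prop :=
  (forall nu, nu \in sat phi -> ~~ odd #|nu|) /\
  ~ (exists nu nu' : {set V}, [/\ ~~ odd #|nu|, ~~ odd #|nu'|, #|nu'| < #|nu|,
        nu \in sat phi & nu' \notin sat phi]).

Definition plus_step (phi phi' : boolfun) (nu : {set V}) (l : V) : Prop :=
  nu \notin sat phi /\ flip nu l \notin sat phi /\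
  sat phi' = sat phi :|: [set nu; flip nu l].

Definition minus_step (phi phi' : boolfun) (nu : {set V}) (l : V) : Prop :=
  plus_step phi' phi nu l.

Definition pm_step (phi phi' : boolfun) : Prop :=
  exists nu l, plus_step phi phi' nu l \/ minus_step phi phi' nu l.

Definition equivb : relation boolfun := clos_refl_trans boolfun pm_step.
End Defs.

(* Main.v *)
From Stdlib Require Import Relations Classical.
Require Import Defs.
From mathcomp Require Import all_boot.
Set Implicit Arguments. Unset Strict Implicit. Unset Printing Implicit Defensive.

Section Aux.
Variable V : finType.

Definition phi_of (S : {set {set V}}) : boolfun V := [ffun x => x \in S].

Lemma satE S : sat (phi_of S) = S.
Proof. by apply/setP => x; rewrite inE ffunE. Qed.

Lemma phi_ofE (phi : boolfun V) : phi_of (sat phi) = phi.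
Proof. by apply/ffunP => x; rewrite ffunE inE. Qed.

Lemma odd_flip (nu : {set V}) l : odd #|flip nu l| = ~~ odd #|nu|.
Proof.
rewrite /flip; case: ifP => h.
  by rewrite [#|nu|](cardsD1 l) h add1n /= negbK.
by rewrite cardsU1 h add1n.
Qed.

Lemma equivb_sym (p q : boolfun V) : equivb p q -> equivb q p.
Proof.
elim => [x y [nu [l [H|H]]]| x | x y z _ H1 _ H2].
- by apply: rt_step; exists nu, l; right.
- by apply: rt_step; exists nu, l; left.
- exact: rt_refl.
- exact: rt_trans H2 H1.
Qed.

Definition alleven (S : {set {set V}}) := forall x, x \in S -> ~~ odd #|x|.

Lemma move2 S nu l m : alleven S -> nu \in S -> flip (flip nu l) m \notin S ->
  equivb (phi_of S) (phi_of (S :\ nu :|: [set flip (flip nu l) m])).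
Proof.
move=> He Hnu.
set a := flip nu l; set mu := flip a m => Hmu.
have oa : odd #|a| by rewrite odd_flip He.
have omu : ~~ odd #|mu| by rewrite odd_flip oa.
have Ha : a \notin S by apply/negP => /He; rewrite oa.
have amu : a != mu by apply/eqP => E; move: omu; rewrite -E oa.
have numu : nu != mu by apply/eqP => E; move: Hmu; rewrite -E Hnu.
apply: (@rt_trans _ _ _ (phi_of (S :|: [set a; mu]))).
  apply: rt_step; exists a, m; left; rewrite /plus_step !satE; do !split => //.
apply: rt_step; exists nu, l; right; rewrite /minus_step /plus_step !satE.
split; first by rewrite !inE eqxx /= (negbTE numu).
split; first by rewrite !inE (negbTE amu) (negbTE Ha) andbF.
apply/setP => x; rewrite !inE -/a.
case: (eqVneq x nu) => [->|xnu]; first by rewrite Hnu !orbT.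
case: (eqVneq x a) => [->|xa]; first by rewrite /= !orbT.
by rewrite /= !orbF.
Qed.

Definition dist (nu mu : {set V}) := #|nu :\: mu| + #|mu :\: nu|.

Lemma dist_flip (nu mu : {set V}) l : (l \in nu) != (l \in mu) ->
  dist nu mu = (dist (flip nu l) mu).+1.
Proof.
rewrite /dist /flip; case: ifP => h /=.
  move=> hm; have {}hm : (l \in mu) = false by move: hm; case: (l \in mu).
  have -> : nu :\ l :\: mu = (nu :\: mu) :\ l .
  apply/setP => y; rewrite !inE; case: (eqVneq y l) => [->|] /=;
  rewrite ?h ?hm //=; by case: (y \in nu); case: (y \in mu).
  have -> : mu :\: (nu :\ l) = mu :\: nu .
  apply/setP => y; rewrite !inE; case: (eqVneq y l) => [->|] /=;
  rewrite ?h ?hm //=; by case: (y \in nu); case: (y \in mu).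
  by rewrite [#|nu :\: mu|](cardsD1 l) !inE h hm.
move=> hm; have {}hm : l \in mu by move: hm; case: (l \in mu).
have -> : (l |: nu) :\: mu = nu :\: mu .
  apply/setP => y; rewrite !inE; case: (eqVneq y l) => [->|] /=;
  rewrite ?h ?hm //=; by case: (y \in nu); case: (y \in mu).
have -> : mu :\: (l |: nu) = (mu :\: nu) :\ l .
  apply/setP => y; rewrite !inE; case: (eqVneq y l) => [->|] /=;
  rewrite ?h ?hm //=; by case: (y \in nu); case: (y \in mu).
by rewrite [#|mu :\: nu|](cardsD1 l) !inE h hm addnS.
Qed.

Lemma dist_pos (nu mu : {set V}) : nu != mu -> exists l, (l \in nu) != (l \in mu).
Proof.
move=> neq.
case: (set_0Vmem (nu :\: mu)) => [E1|[l]]; last first.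
  by rewrite inE => /andP[h1 h2]; exists l; rewrite h2.
case: (set_0Vmem (mu :\: nu)) => [E2|[l]]; last first.
  by rewrite inE => /andP[h1 h2]; exists l; rewrite h2 (negbTE h1).
move/eqP: E1; move/eqP: E2; rewrite !setD_eq0 => s1 s2.
by move: neq; rewrite eqEsubset s1 s2.
Qed.

Lemma dist0 (nu mu : {set V}) : dist nu mu = 0 -> nu = mu.
Proof.
move=> h; apply/eqP; apply/negPn/negP => /dist_pos [l /dist_flip].
by rewrite h.
Qed.

Lemma exchange n : forall S nu mu, alleven S -> nu \in S -> mu \notin S ->
  ~~ odd #|mu| -> dist nu mu <= n ->
  equivb (phi_of S) (phi_of (S :\ nu :|: [set mu])).
Proof.
elim: n {-2}n (leqnn n) => [|N IH] n hn S nu mu He Hnu Hmu omu hd.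
  have: dist nu mu = 0 by apply/eqP; rewrite -leqn0 (leq_trans hd hn).
  by move/dist0 => E; move: Hmu; rewrite -E Hnu.
have numu : nu != mu by apply/eqP => E; move: Hmu; rewrite -E Hnu.
have onu := He _ Hnu.
have [l hl] := dist_pos numu.
have d1 := dist_flip hl.
set nu1 := flip nu l in d1.
have on1 : odd #|nu1| by rewrite odd_flip onu.
have n1mu : nu1 != mu by apply/eqP => E; move: omu; rewrite -E on1.
have [m hm] := dist_pos n1mu.
have d2 := dist_flip hm.
set rho := flip nu1 m in d2.
have orho : ~~ odd #|rho| by rewrite odd_flip on1.
case: (eqVneq rho mu) => [E|rmu].
  by rewrite -E; apply: move2 => //; rewrite -/nu1 -/rho E.
have rnu : rho != nu.
  by apply/eqP => E; move: d1; rewrite d2 E => /eqP; rewrite -addn2 -{1}(addn0 (dist nu mu)) eqn_add2l.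
have hdr : dist rho mu <= N.
  by have H := leq_trans hd hn; rewrite d1 d2 ltnS in H; apply: ltnW.
case: (boolP (rho \in S)) => Hr.
  have E1 := IH _ (leqnn N) S rho mu He Hr Hmu omu hdr.
  set S2 := S :\ rho :|: [set mu] in E1.
  have He2 : alleven S2.
    by move=> x; rewrite !inE => /orP[/andP[_ /He]|/eqP ->].
  have Hnu2 : nu \in S2 by rewrite !inE Hnu (negbTE numu) orbF andbT eq_sym.
  have Hr2 : rho \notin S2 by rewrite !inE eqxx /= (negbTE rmu).
  have E2 := move2 He2 Hnu2 Hr2.
  have -> : S :\ nu :|: [set mu] = S2 :\ nu :|: [set rho].
    apply/setP => x; rewrite !inE.
    case: (eqVneq x rho) => [->|]; first by rewrite rnu Hr !orbT.
    move=> _; rewrite /= !orbF; case: (eqVneq x mu) => [->|]; last by rewrite !orbF.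
    by rewrite eq_sym numu !orbT.
  exact: rt_trans E1 E2.
have E1 := move2 He Hnu Hr.
set S1 := S :\ nu :|: [set rho] in E1.
have He1 : alleven S1.
  by move=> x; rewrite !inE => /orP[/andP[_ /He]|/eqP ->].
have Hr1 : rho \in S1 by rewrite !inE eqxx orbT.
have Hmu1 : mu \notin S1 by rewrite !inE (negbTE Hmu) andbF /= eq_sym (negbTE rmu).
have E2 := IH _ (leqnn N) S1 rho mu He1 Hr1 Hmu1 omu hdr.
have <- : S1 :\ rho :|: [set mu] = S :\ nu :|: [set mu].
  apply/setP => x; rewrite !inE.
  case: (eqVneq x rho) => [->|] /=; last by rewrite orbF.
  by rewrite (negbTE Hr) andbF (negbTE rmu).
exact: rt_trans E1 E2.
Qed.

Definition pot (S : {set {set V}}) := \sum_(x in S) #|x|.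

Lemma main_aux n : forall S, alleven S -> pot S <= n ->
  exists phic : boolfun V, canonical_form phic /\ equivb phic (phi_of S).
Proof.
elim: n {-2}n (leqnn n) => [|N IH] n hn S He hp;
  (case: (classic (exists nu nu' : {set V}, [/\ ~~ odd #|nu|, ~~ odd #|nu'|, #|nu'| < #|nu|,
        nu \in sat (phi_of S) & nu' \notin sat (phi_of S)])) => Hc;
   [|by exists (phi_of S); split; [split => //; rewrite satE|exact: rt_refl]]);
  case: Hc => nu [nu' [o1 o2 lt Hnu Hnu']]; rewrite !satE in Hnu Hnu'.
  move: hn hp; rewrite leqn0 => /eqP -> ; rewrite leqn0 /pot (bigD1 nu) //=.
  by move: lt; case: #|nu|.
set S' := S :\ nu :|: [set nu'].
have He' : alleven S'.
  by move=> x; rewrite !inE => /orP[/andP[_ /He]|/eqP ->].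
have hp' : pot S' < pot S.
  have H1 : nu' \in S' by rewrite !inE eqxx orbT.
  rewrite /pot (big_setD1 _ Hnu) (big_setD1 _ H1).
  have -> : S' :\ nu' = S :\ nu.
    apply/setP => x; rewrite !inE.
    case: (eqVneq x nu') => [->|] /=; first by rewrite (negbTE Hnu') !andbF.
    by rewrite orbF.
  by rewrite /= ltn_add2r.
have [phic [Hc Hq]] := IH _ (leqnn N) S' He' (leq_trans (leq_trans hp' hp) hn).
exists phic; split => //.
apply: rt_trans Hq _; apply: equivb_sym.
exact: (@exchange _ S nu nu' He Hnu Hnu' o2 (leqnn _)).
Qed.

End Aux.

Theorem lemma6p7 (k : nat) (hk : 1 <= k) (phi : boolfun 'I_k.+1) :
  (forall nu, nu \in sat phi -> ~~ odd #|nu|) ->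
  exists phic : boolfun 'I_k.+1, canonical_form phic /\ equivb phic phi.
Proof.
move=> He; rewrite -(phi_ofE phi).
by apply: (@main_aux _ _ _ _ (leqnn _)) => x; apply: He.
Qed.
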